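(* For any $\tau_f\in(\tau_1^i,\tau_2^i)$ there exists a unique $\tau_{pr}=\tau_{pr}(\tau_f)\in(1,\tau_f)$ such that, with $\tau_b=\tau_{pr}(\tau_f)$, $$p'(\tau_b)<\frac{2h(\tau_b)-2h(\tau_f)}{\tau_b^2-\tau_f^2}=p'(\tau_f)$$ and Liu's extended entropy condition $\frac{2h(\tau_f)-2h(\tau_b)}{\tau_f^2-\tau_b^2}<\frac{2h(\tau_f)-2h(\tau)}{\tau_f^2-\tau^2}$ for all $\tau\in(\tau_b,\tau_f)$ hold. Moreover, $\frac{d\tau_{pr}}{d\tau_f}<0$ for $\tau_f\in(\tau_1^i,\tau_2^i)$.
   Context: The pressure is $p(\tau)=\frac{\mathcal S}{(\tau-1)^\gamma}-\frac{1}{\tau^2}$ for $\tau>1$, with constants $1<\gamma<2$, $\mathcal S>0$, assumed such that there exist $1<\tau_1^i<\tau_2^i$ with $p'<0$ on $(1,\infty)$, $p''>0$ on $(1,\tau_1^i)\cup(\tau_2^i,\infty)$, $p''<0$ on $(\tau_1^i,\tau_2^i)$. The function $h$ satisfies $h'(\tau)=\tau p'(\tau)$. *)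

(* Defs.v *)
From Stdlib Require Import Reals.
From Coquelicot Require Import Coquelicot.
Open Scope R_scope.

Definition pres (S gamma : R) (tau : R) : R :=
  S / Rpower (tau - 1) gamma - 1 / tau ^ 2.

Definition chord (h : R -> R) (a b : R) : R :=
  (2 * h a - 2 * h b) / (a ^ 2 - b ^ 2).

Definition tpr_prop (S gamma : R) (h : R -> R) (tf tb : R) : Prop :=
  Derive (pres S gamma) tb < chord h tb tf /\
  chord h tb tf = Derive (pres S gamma) tf /\
  (forall tau, tb < tau < tf -> chord h tf tb < chord h tf tau).

(* Main.v *)
Require Import Defs.
From Stdlib Require Import Reals Lra Classical ClassicalEpsilon.
From Coquelicot Require Import Coquelicot.
Open Scope R_scope.
Lemma dq (f : R -> R) (x l : R) : is_derive f x l -> is_lim (fun y => (f y - f x)/(y - x)) x l.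
Proof.
  intros H. apply is_derive_Reals in H. apply is_lim_spec.
  intros eps. destruct (H eps (cond_pos eps)) as [d Hd].
  exists d. intros y. change R in y. intros Hy Hyx.
  change (Rabs (y - x) < d) in Hy.
  assert (Hne : y - x <> 0) by lra.
  specialize (Hd (y - x) Hne Hy). replace (x + (y - x)) with y in Hd by ring.
  exact Hd.
Qed.
Lemma qd (f : R -> R) (x l : R) : is_lim (fun y => (f y - f x)/(y - x)) x l -> is_derive f x l.
Proof.
  intros H. apply is_derive_Reals. apply is_lim_spec in H. unfold is_lim' in H; cbn iota beta in H.
  intros eps Heps. destruct (H (mkposreal eps Heps)) as [d Hd].
  exists d. intros k Hk Hkd.
  assert (B : ball x d (x + k)).
  { change (Rabs (x + k - x) < d). replace (x + k - x) with k by ring. exact Hkd. }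
  assert (N : x + k <> x) by lra.
  specialize (Hd (x+k) B N). simpl in Hd. replace (x + k - x) with k in Hd by ring.
  exact Hd.
Qed.
Lemma mvt f df a b : a < b -> (forall c, a <= c <= b -> is_derive f c (df c)) ->
  exists c, a < c < b /\ f b - f a = df c * (b - a).
Proof.
  intros Hab Hd. destruct (MVT_cor2 f df a b Hab) as [c [E Hc]].
  - intros c Hc. apply is_derive_Reals. auto.
  - exists c. split; auto.
Qed.
Lemma incr f df a b : a < b -> (forall c, a <= c <= b -> is_derive f c (df c)) ->
  (forall c, a < c < b -> 0 < df c) -> f a < f b.
Proof.
  intros Hab Hd Hp. destruct (mvt f df a b Hab Hd) as [c [Hc E]].
  specialize (Hp c Hc). nra.
Qed.
Lemma decr f df a b : a < b -> (forall c, a <= c <= b -> is_derive f c (df c)) ->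
  (forall c, a < c < b -> df c < 0) -> f b < f a.
Proof.
  intros Hab Hd Hp. destruct (mvt f df a b Hab Hd) as [c [Hc E]].
  specialize (Hp c Hc). nra.
Qed.
Lemma cont_pos f x : continuity_pt f x -> 0 < f x ->
  exists d, 0 < d /\ forall y, Rabs (y - x) < d -> 0 < f y.
Proof.
  intros H Hp. destruct (H (f x) Hp) as [d [Hd Hy]].
  exists d. split; auto. intros y Hyd.
  destruct (Req_dec y x) as [->|Hne]; auto.
  assert (A := Hy y (conj (conj I (not_eq_sym Hne)) Hyd)).
  simpl in A. unfold R_dist in A. apply Rabs_def2 in A. lra.
Qed.
Lemma cont_neg f x : continuity_pt f x -> f x < 0 ->
  exists d, 0 < d /\ forall y, Rabs (y - x) < d -> f y < 0.
Proof.
  intros H Hp. destruct (cont_pos (fun y => - f y) x) as [d [Hd Hy]].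
  - apply continuity_pt_opp; auto.
  - lra.
  - exists d. split; auto. intros y Hyd. specialize (Hy y Hyd). lra.
Qed.
Lemma deriv_cont f x l : is_derive f x l -> continuity_pt f x.
Proof.
  intros H. apply continuity_pt_filterlim. apply (ex_derive_continuous f x). exists l; auto.
Qed.
Definition f1 S g t := - S * g / (t-1) / exp (g * ln (t-1)) + 2 / t^3.
Lemma dP S g t : 1 < t -> is_derive (pres S g) t (f1 S g t).
Proof. intros Ht. unfold pres, Rpower, f1. auto_derive.
- repeat split; try lra. apply Rgt_not_eq, exp_pos. nra.
- replace (t + - (1)) with (t - 1) by ring.
  assert (exp (g * ln (t - 1)) <> 0) by (apply Rgt_not_eq, exp_pos).
  field. split; lra.
Qed.
Lemma dP1 S g t : 1 < t -> is_derive (Derive (pres S g)) t (Derive (Derive (pres S g)) t).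
Proof. intros Ht. apply Derive_correct.
  apply ex_derive_ext_loc with (f := f1 S g).
  - assert (Hp : 0 < t - 1) by lra. exists (mkposreal _ Hp). intros y Hy.
    change (Rabs (y - t) < t - 1) in Hy. apply Rabs_def2 in Hy.
    symmetry. apply is_derive_unique. apply dP. lra.
  - unfold f1. auto_derive. repeat split; try lra.
    apply Rgt_not_eq, exp_pos. assert (0 < t * (t * (t * 1))) by (apply Rmult_lt_0_compat; [lra|nra]). lra.
Qed.
Lemma bnd S g t : 0 < S -> 1 < g -> 1 < t < 2 -> S / (t - 1) - 1 <= pres S g t.
Proof. intros HS Hg Ht. unfold pres, Rpower.
  assert (L : ln (t - 1) < 0). { rewrite <- ln_1. apply ln_increasing; lra. }
  assert (E : exp (g * ln (t - 1)) < t - 1).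
  { rewrite <- (exp_ln (t-1)) at 2 by lra. apply exp_increasing. nra. }
  assert (E0 := exp_pos (g * ln (t - 1))).
  assert (A : S / (t - 1) <= S / exp (g * ln (t - 1))).
  { apply Rmult_le_compat_l; [lra|]. apply Rinv_le_contravar; lra. }
  assert (B : 1 / t ^ 2 <= 1).
  { apply (Rmult_le_reg_r (t^2)). nra. unfold Rdiv. rewrite Rmult_assoc, Rinv_l by nra. nra. }
  lra.
Qed.
Definition Fd (h P1 : R -> R) x t := h t - h x - P1 x * (t^2 - x^2)/2.
Lemma dF (h P1 : R -> R) x t : is_derive h t (t * P1 t) -> is_derive (Fd h P1 x) t (t * (P1 t - P1 x)).
Proof. intros H. unfold Fd. auto_derive.
  - exists (t * P1 t); exact H.
  - replace (Derive (fun x0 => h x0) t) with (t*P1 t) by (symmetry; apply is_derive_unique; exact H).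
    field.
Qed.
Lemma dFx (h P1 P2 : R -> R) x t : is_derive h x (x * P1 x) -> is_derive P1 x (P2 x) -> is_derive (fun y => Fd h P1 y t) x (- P2 x * (t^2 - x^2)/2).
Proof. intros H H1. unfold Fd. auto_derive.
  - split; [exists (x * P1 x); exact H|split; [exists (P2 x); exact H1|exact I]].
  - replace (Derive (fun x0 => h x0) x) with (x*P1 x) by (symmetry; apply is_derive_unique; exact H).
    replace (Derive (fun x0 => P1 x0) x) with (P2 x) by (symmetry; apply is_derive_unique; exact H1).
    field.
Qed.
Definition Hyps (h P P1 P2 : R -> R) (t1 t2 : R) : Prop :=
  (1 < t1 < t2) /\
  (forall t, 1 < t -> is_derive P1 t (P2 t)) /\
  (forall t, 1 < t -> is_derive h t (t * P1 t)) /\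
  (forall t, 1 < t -> is_derive P t (P1 t)) /\
  (forall t, 1 < t -> P1 t < 0) /\
  (forall t, 1 < t < t1 -> 0 < P2 t) /\
  (forall t, t1 < t < t2 -> P2 t < 0) /\
  (forall K, exists a, 1 < a < t1 /\ K < P a).

Lemma P1dec h P P1 P2 t1 t2 : Hyps h P P1 P2 t1 t2 -> forall x y,
  x < t2 -> t1 <= y < x -> P1 x < P1 y.
Proof. intros (H0 & HdP1 & Hdh & HdP & Hneg & Hpos & Hn2 & Hbig) x y Hx Hy.
  apply (decr P1 P2 y x). lra. intros c Hc. apply HdP1. lra.
  intros c Hc. apply Hn2. lra.
Qed.
Lemma P1inc h P P1 P2 t1 t2 : Hyps h P P1 P2 t1 t2 -> forall a b,
  1 < a < b -> b <= t1 -> P1 a < P1 b.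
Proof. intros (H0 & HdP1 & Hdh & HdP & Hneg & Hpos & Hn2 & Hbig) a b Hab Hb.
  apply (incr P1 P2 a b). lra. intros c Hc. apply HdP1. lra.
  intros c Hc. apply Hpos. lra.
Qed.
Lemma K1 h P P1 P2 t1 t2 : Hyps h P P1 P2 t1 t2 -> forall x y,
  x < t2 -> t1 <= y < x -> Fd h P1 x y < 0.
Proof. intros HH. pose proof HH as (H0 & HdP1 & Hdh & HdP & Hneg & Hpos & Hn2 & Hbig).
  intros x y Hx Hy.
  assert (E : Fd h P1 x x = 0) by (unfold Fd; field).
  rewrite <- E. apply (incr (Fd h P1 x) (fun c => c * (P1 c - P1 x)) y x). lra.
  intros c Hc. apply dF, Hdh. lra.
  intros c Hc. assert (P1 x < P1 c) by (apply (P1dec _ _ _ _ _ _ HH); lra). nra.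
Qed.
Lemma K2 h P P1 P2 t1 t2 : Hyps h P P1 P2 t1 t2 -> forall x xi y,
  1 < xi <= y -> y < t1 -> P1 x <= P1 xi -> Fd h P1 x y < Fd h P1 x t1.
Proof. intros HH. pose proof HH as (H0 & HdP1 & Hdh & HdP & Hneg & Hpos & Hn2 & Hbig).
  intros x xi y Hy Hy1 Hxi.
  apply (incr (Fd h P1 x) (fun c => c * (P1 c - P1 x)) y t1). lra.
  intros c Hc. apply dF, Hdh. lra.
  intros c Hc. assert (P1 xi < P1 c) by (apply (P1inc _ _ _ _ _ _ HH); lra). nra.
Qed.
Lemma S1 h P P1 P2 t1 t2 : Hyps h P P1 P2 t1 t2 -> forall x b,
  t1 < x < t2 -> 1 < b < x -> Fd h P1 x b = 0 ->
  P1 b < P1 x /\ (forall y, 1 < y < b -> 0 < Fd h P1 x y) /\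
  (forall y, b < y < x -> Fd h P1 x y < 0).
Proof. intros HH. pose proof HH as (H0 & HdP1 & Hdh & HdP & Hneg & Hpos & Hn2 & Hbig).
  intros x b Hx Hb Fb.
  assert (Ft1 : Fd h P1 x t1 < 0) by (apply (K1 _ _ _ _ _ _ HH); lra).
  assert (Hbt : b < t1).
  { destruct (Rlt_le_dec b t1) as [|Hle]; auto.
    assert (Fd h P1 x b < 0) by (apply (K1 _ _ _ _ _ _ HH); lra). lra. }
  split; [|split].
  - destruct (Rlt_le_dec (P1 b) (P1 x)) as [|Hle]; auto.
    assert (Fd h P1 x b < Fd h P1 x t1) by (apply (K2 _ _ _ _ _ _ HH x b b); lra). lra.
  - intros y Hy. destruct (Rlt_le_dec 0 (Fd h P1 x y)) as [|Hle]; auto.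
    destruct (mvt (Fd h P1 x) (fun c => c * (P1 c - P1 x)) y b) as [xi [Hxi E]]. lra.
    intros c Hc. apply dF, Hdh. lra.
    assert (P1 x <= P1 xi).
    { destruct (Rle_lt_dec (P1 x) (P1 xi)) as [|Hl]; auto. exfalso.
      assert (xi*(b-y) * (P1 x - P1 xi) > 0) by (apply Rmult_lt_0_compat; nra). nra. }
    assert (Fd h P1 x b < Fd h P1 x t1) by (apply (K2 _ _ _ _ _ _ HH x xi b); lra). lra.
  - intros y Hy. destruct (Rlt_le_dec (Fd h P1 x y) 0) as [|Hle]; auto.
    assert (Hyt : y < t1).
    { destruct (Rlt_le_dec y t1) as [|Hle']; auto.
      assert (Fd h P1 x y < 0) by (apply (K1 _ _ _ _ _ _ HH); lra). lra. }
    destruct (mvt (Fd h P1 x) (fun c => c * (P1 c - P1 x)) b y) as [xi [Hxi E]]. lra.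
    intros c Hc. apply dF, Hdh. lra.
    assert (P1 x <= P1 xi).
    { destruct (Rle_lt_dec (P1 x) (P1 xi)) as [|Hl]; auto. exfalso.
      assert (xi*(y-b) * (P1 x - P1 xi) > 0) by (apply Rmult_lt_0_compat; nra). nra. }
    assert (Fd h P1 x y < Fd h P1 x t1) by (apply (K2 _ _ _ _ _ _ HH x xi y); lra). lra.
Qed.
Lemma Ex h P P1 P2 t1 t2 : Hyps h P P1 P2 t1 t2 -> forall x,
  t1 < x < t2 -> exists b, 1 < b < x /\ Fd h P1 x b = 0.
Proof. intros HH. pose proof HH as (H0 & HdP1 & Hdh & HdP & Hneg & Hpos & Hn2 & Hbig).
  intros x Hx.
  destruct (Hbig (P x - P1 x * x^2/2)) as [a [Ha HPa]].
  assert (Hk : h x - P x < h a - P a).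
  { apply (decr (fun t => h t - P t) (fun c => c * P1 c - P1 c) a x). lra.
    intros c Hc. apply (is_derive_minus h P). apply Hdh; lra. apply HdP; lra.
    intros c Hc. assert (P1 c < 0) by (apply Hneg; lra). nra. }
  assert (Fa : 0 < Fd h P1 x a).
  { unfold Fd. assert (P1 x < 0) by (apply Hneg; lra). nra. }
  assert (Ft1 : Fd h P1 x t1 < 0) by (apply (K1 _ _ _ _ _ _ HH); lra).
  destruct (Ranalysis5.IVT_interv (fun t => - Fd h P1 x t) a t1) as [z [Hz Ez]].
  - intros c Hc. apply continuity_pt_opp. apply (deriv_cont _ _ (c * (P1 c - P1 x))).
    apply dF, Hdh. lra.
  - lra.
  - lra.
  - lra.
  - exists z. split. lra. lra.
Qed.
Lemma Deriv h P P1 P2 t1 t2 : Hyps h P P1 P2 t1 t2 -> forall (b : R -> R),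
  (forall x, t1 < x < t2 -> 1 < b x < x /\ Fd h P1 x (b x) = 0) ->
  forall x0, t1 < x0 < t2 -> exists d, is_derive b x0 d /\ d < 0.
Proof. intros HH. pose proof HH as (H0 & HdP1 & Hdh & HdP & Hneg & Hpos & Hn2 & Hbig).
  intros b Hb x0 Hx0.
  set (b0 := b x0).
  destruct (Hb x0 Hx0) as [Hb0 Fb0]. fold b0 in Hb0, Fb0.
  destruct (S1 _ _ _ _ _ _ HH x0 b0 Hx0 Hb0 Fb0) as (HP1b0 & Fpos0 & Fneg0).
  assert (cF : forall t, continuity_pt (fun y => Fd h P1 y t) x0).
  { intros t. apply (deriv_cont _ _ (- P2 x0 * (t^2 - x0^2)/2)).
    apply dFx. apply Hdh; lra. apply HdP1; lra. }
  assert (Cb : continuity_pt b x0).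
  { intros eps Heps.
    set (e := Rmin eps (Rmin ((b0-1)/2) ((x0-b0)/2))).
    assert (He : 0 < e /\ e <= eps /\ e <= (b0-1)/2 /\ e <= (x0-b0)/2).
    { unfold e. repeat split.
      - apply Rmin_pos; [lra|apply Rmin_pos; lra].
      - apply Rmin_l.
      - eapply Rle_trans; [apply Rmin_r|apply Rmin_l].
      - eapply Rle_trans; [apply Rmin_r|apply Rmin_r]. }
    destruct (cont_pos _ _ (cF (b0 - e))) as [d1 [Hd1 D1]].
    { apply Fpos0. lra. }
    destruct (cont_neg _ _ (cF (b0 + e))) as [d2 [Hd2 D2]].
    { apply Fneg0. lra. }
    set (al := Rmin (Rmin d1 d2) (Rmin (Rmin (x0 - t1) (t2 - x0)) ((x0-b0)/2))).
    assert (Hal : 0 < al /\ al <= d1 /\ al <= d2 /\ al <= x0 - t1 /\ al <= t2 - x0 /\ al <= (x0-b0)/2).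
    { unfold al. repeat split.
      - repeat apply Rmin_pos; lra.
      - eapply Rle_trans; [apply Rmin_l|apply Rmin_l].
      - eapply Rle_trans; [apply Rmin_l|apply Rmin_r].
      - eapply Rle_trans; [apply Rmin_r|]. eapply Rle_trans; [apply Rmin_l|apply Rmin_l].
      - eapply Rle_trans; [apply Rmin_r|]. eapply Rle_trans; [apply Rmin_l|apply Rmin_r].
      - eapply Rle_trans; [apply Rmin_r|apply Rmin_r]. }
    exists al. split. lra.
    intros y [_ Hy]. simpl in Hy. unfold R_dist in Hy. simpl. unfold R_dist.
    apply Rabs_def2 in Hy. fold b0.
    assert (Hyr : Rabs (y - x0) < d1) by (apply Rabs_def1; lra).
    assert (Hyr2 : Rabs (y - x0) < d2) by (apply Rabs_def1; lra).
    specialize (D1 y Hyr). specialize (D2 y Hyr2). simpl in D1, D2.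
    assert (Hy' : t1 < y < t2) by lra.
    destruct (Hb y Hy') as [Hby Fby].
    destruct (S1 _ _ _ _ _ _ HH y (b y) Hy' Hby Fby) as (_ & Fp & Fn).
    assert (L : b0 - e < b y).
    { destruct (Rlt_le_dec (b0 - e) (b y)) as [|Hle]; auto.
      destruct (Rle_lt_or_eq_dec _ _ Hle) as [Hlt|Heq].
      - assert (Fd h P1 y (b0 - e) < 0) by (apply Fn; lra). lra.
      - rewrite <- Heq in D1. lra. }
    assert (U : b y < b0 + e).
    { destruct (Rlt_le_dec (b y) (b0 + e)) as [|Hle]; auto.
      destruct (Rle_lt_or_eq_dec _ _ Hle) as [Hlt|Heq].
      - assert (0 < Fd h P1 y (b0 + e)) by (apply Fp; lra). lra.
      - rewrite Heq in D2. lra. }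
    apply Rabs_def1; lra. }
  set (q := fun t => if Req_EM_T t b0 then b0 * P1 b0 else (h t - h b0) / (t - b0)).
  assert (qb0 : q b0 = b0 * P1 b0).
  { unfold q. destruct (Req_EM_T b0 b0); [reflexivity|congruence]. }
  assert (Cq : continuity_pt q b0).
  { apply continuity_pt_filterlim'. rewrite qb0.
    assert (L := dq h b0 (b0 * P1 b0) (Hdh b0 ltac:(lra))).
    apply (is_lim_ext_loc _ q) in L. exact L.
    exists (mkposreal 1 Rlt_0_1). intros t _ Ht. unfold q.
    destruct (Req_EM_T t b0); [contradiction|reflexivity]. }
  set (A := fun y => q (b y) - P1 y * ((b y + b0) / 2)).
  assert (CA : continuity_pt A x0).
  { unfold A. apply continuity_pt_minus.
    - exact (continuity_pt_comp b q x0 Cb Cq).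
    - apply continuity_pt_mult. apply (deriv_cont _ _ (P2 x0)). apply HdP1; lra.
      apply continuity_pt_mult. apply continuity_pt_plus. exact Cb. apply continuity_pt_const. intros u v; reflexivity.
      apply continuity_pt_const. intros u v; reflexivity. }
  assert (A0 : A x0 = b0 * (P1 b0 - P1 x0)).
  { unfold A. fold b0. rewrite qb0. field. }
  assert (A0n : A x0 < 0).
  { rewrite A0. assert (0 < b0 * (P1 x0 - P1 b0)) by (apply Rmult_lt_0_compat; lra). lra. }
  destruct (cont_neg _ _ CA A0n) as [dA [HdA DA]].
  set (B0 := - P2 x0 * (b0^2 - x0^2)/2).
  assert (LB := dq (fun y => Fd h P1 y b0) x0 B0 (dFx h P1 P2 x0 b0 (Hdh x0 ltac:(lra)) (HdP1 x0 ltac:(lra)))).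
  assert (LA : is_lim A x0 (A x0)).
  { apply continuity_pt_filterlim' in CA. exact CA. }
  assert (LQ := is_lim_div _ _ x0 _ _ (is_lim_opp _ x0 _ LB) LA).
  exists (- B0 / A x0). split.
  - apply qd.
    assert (NZ : Finite (A x0) <> Finite 0) by (intros E; injection E; lra).
    assert (LQ' := LQ NZ I).
    eapply is_lim_ext_loc; [|exact LQ'].
    assert (Hdel : 0 < Rmin dA (Rmin (x0 - t1) (t2 - x0))) by (repeat apply Rmin_pos; lra).
    exists (mkposreal _ Hdel). intros y Hy Hyx.
    change (Rabs (y - x0) < Rmin dA (Rmin (x0 - t1) (t2 - x0))) in Hy.
    assert (Hy1 : Rabs (y - x0) < dA) by (eapply Rlt_le_trans; [exact Hy| apply Rmin_l]).
    assert (Hy2 : Rabs (y - x0) < Rmin (x0 - t1) (t2 - x0)) by (eapply Rlt_le_trans; [exact Hy| apply Rmin_r]).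
    assert (Ay := DA y Hy1).
    apply Rabs_def2 in Hy2. destruct Hy2 as [Hy2a Hy2b].
    assert (m1 := Rmin_l (x0 - t1) (t2 - x0)). assert (m2 := Rmin_r (x0 - t1) (t2 - x0)).
    assert (Hy' : t1 < y < t2) by lra.
    destruct (Hb y Hy') as [Hby Fby].
    assert (Iden : (b y - b0) * A y = - (Fd h P1 y b0 - Fd h P1 x0 b0)).
    { unfold A, q. destruct (Req_EM_T (b y) b0) as [Heq|Hne].
      - rewrite Heq in Fby |- *. rewrite Fby, Fb0. ring.
      - rewrite Fb0. unfold Fd in Fby |- *.
        assert (Hne' : b y - b0 <> 0) by lra.
        transitivity (h (b y) - h b0 - P1 y * ((b y)^2 - b0^2)/2).
        + field. exact Hne'.
        + lra. }
    fold b0. cbv beta.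
    assert (Hyx' : y - x0 <> 0) by lra.
    assert (Eb : b y - b0 = - (Fd h P1 y b0 - Fd h P1 x0 b0) / A y).
    { rewrite <- Iden. field. lra. }
    rewrite Eb. field. split; lra.
  - assert (B0n : B0 < 0).
    { unfold B0. assert (P2 x0 < 0) by (apply Hn2; lra).
      assert (b0^2 < x0^2) by nra. nra. }
    assert (/ A x0 < 0) by (apply Rinv_lt_0_compat; lra).
    unfold Rdiv. nra.
Qed.
Lemma lt_div a n c : 0 < c -> a * c < n -> a < n / c.
Proof. intros Hc H. assert (0 < (n - a * c) / c) by (apply Rdiv_lt_0_compat; lra).
  replace ((n - a * c) / c) with (n / c - a) in H0 by (field; lra). lra. Qed.
Lemma div_eq a n c : c <> 0 -> n = a * c -> n / c = a.
Proof. intros Hc ->. field. exact Hc. Qed.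
Lemma eq_div a n c : c <> 0 -> n / c = a -> n = a * c.
Proof. intros Hc <-. field. exact Hc. Qed.

Theorem proposition3p5 :
  forall (S gamma tau1 tau2 : R) (h : R -> R),
    1 < gamma < 2 -> 0 < S -> 1 < tau1 < tau2 ->
    (forall tau, 1 < tau -> Derive (pres S gamma) tau < 0) ->
    (forall tau, (1 < tau < tau1 \/ tau2 < tau) ->
        0 < Derive (Derive (pres S gamma)) tau) ->
    (forall tau, tau1 < tau < tau2 ->
        Derive (Derive (pres S gamma)) tau < 0) ->
    (forall tau, 1 < tau -> is_derive h tau (tau * Derive (pres S gamma) tau)) ->
    exists tpr : R -> R,
      (forall tf, tau1 < tf < tau2 ->
         1 < tpr tf < tf /\ tpr_prop S gamma h tf (tpr tf) /\
         (forall tb, 1 < tb < tf -> tpr_prop S gamma h tf tb -> tb = tpr tf)) /\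
      (forall tf, tau1 < tf < tau2 ->
         exists d, is_derive tpr tf d /\ d < 0).
Proof.
  intros S g t1 t2 h Hg HS Ht Hp1 Hp2pos Hp2neg Hh.
  assert (HH : Hyps h (pres S g) (Derive (pres S g)) (Derive (Derive (pres S g))) t1 t2).
  { split; [exact Ht|]. split; [intros t Htt; apply dP1; exact Htt|].
    split; [exact Hh|]. split.
    { intros t Htt. apply Derive_correct. exists (f1 S g t). apply dP. exact Htt. }
    split; [exact Hp1|]. split; [intros t Htt; apply Hp2pos; left; exact Htt|].
    split; [exact Hp2neg|].
    intros K.
    set (d := Rmin (1/2) (Rmin ((t1-1)/2) (S/(Rabs K + 2)))).
    assert (HK : 0 < Rabs K + 2) by (assert (0 <= Rabs K) by apply Rabs_pos; lra).
    assert (Hd : 0 < d /\ d <= 1/2 /\ d <= (t1-1)/2 /\ d <= S/(Rabs K + 2)).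
    { unfold d. repeat split.
      - repeat apply Rmin_pos; try lra. apply Rdiv_lt_0_compat; lra.
      - apply Rmin_l.
      - eapply Rle_trans; [apply Rmin_r|apply Rmin_l].
      - eapply Rle_trans; [apply Rmin_r|apply Rmin_r]. }
    exists (1 + d). split. lra.
    assert (B := bnd S g (1 + d) HS (proj1 Hg) ltac:(lra)).
    replace (1 + d - 1) with d in B by ring.
    assert (Sd : Rabs K + 2 <= S / d).
    { apply Rmult_le_reg_r with d. lra. unfold Rdiv. rewrite Rmult_assoc, Rinv_l by lra.
      destruct Hd as (Hd0 & Hd1 & Hd2 & Hd3).
      apply Rmult_le_compat_l with (r := Rabs K + 2) in Hd3; [|lra].
      replace ((Rabs K + 2) * (S / (Rabs K + 2))) with S in * by (field; lra). lra. }
    assert (K <= Rabs K) by apply Rle_abs. lra. }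
  assert (Ex' : forall x, exists b, t1 < x < t2 -> 1 < b < x /\ Fd h (Derive (pres S g)) x b = 0).
  { intros x. destruct (classic (t1 < x < t2)) as [Hx|Hx].
    - destruct (Ex _ _ _ _ _ _ HH x Hx) as [b Hb]. exists b. intros _. exact Hb.
    - exists 0. intros Hx'. contradiction. }
  set (tpr := fun x => proj1_sig (constructive_indefinite_description _ (Ex' x))).
  assert (Hb : forall x, t1 < x < t2 -> 1 < tpr x < x /\ Fd h (Derive (pres S g)) x (tpr x) = 0).
  { intros x Hx. unfold tpr. destruct (constructive_indefinite_description _ (Ex' x)) as [b Hb].
    simpl. apply Hb. exact Hx. }
  exists tpr. split.
  - intros tf Htf. destruct (Hb tf Htf) as [Hr Fr].
    destruct (S1 _ _ _ _ _ _ HH tf (tpr tf) Htf Hr Fr) as (HP & Fp & Fn).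
    assert (CE : forall a, 1 < a < tf ->
      (Fd h (Derive (pres S g)) tf a = 0 <-> chord h a tf = Derive (pres S g) tf)).
    { intros a Ha. assert (Hne : a^2 - tf^2 <> 0) by nra. unfold chord, Fd. split.
      - intros E. apply div_eq. exact Hne. lra.
      - intros E. apply eq_div in E; [|exact Hne]. lra. }
    assert (CS : forall a, 1 < a < tf -> chord h a tf = chord h tf a).
    { intros a Ha. unfold chord.
      assert (E : a^2 - tf^2 <> 0) by nra.
      field. split; intros E'; apply E; lra. }
    split; [lra|split].
    + unfold tpr_prop. assert (C := proj1 (CE _ Hr) Fr).
      split; [rewrite C; exact HP|split; [exact C|]].
      intros tau Htau. rewrite <- (CS _ Hr), C.
      unfold chord. apply lt_div. nra.
      assert (F := Fn tau Htau). unfold Fd in F. lra.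
    + intros tb Htb [_ [C _]].
      apply (proj2 (CE _ Htb)) in C.
      destruct (Rtotal_order tb (tpr tf)) as [Hl|[He|Hg']]; auto.
      * assert (0 < Fd h (Derive (pres S g)) tf tb) by (apply Fp; lra). lra.
      * assert (Fd h (Derive (pres S g)) tf tb < 0) by (apply Fn; lra). lra.
  - intros tf Htf. apply (Deriv _ _ _ _ _ _ HH tpr Hb tf Htf).
Qed.
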